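(* Let $K$, $D$, $N\ge2$, $\mu$, $m=e^{2\pi i\mu}$ be as in the context. Let $(b_i)$ be a solution of the segment equations of $D$ with meridian eigenvalue $m$, with $b=1$ on the boundary segment of the closure, all $b_i\neq 0$, and such that no shape parameter $z$ (at any corner of any crossing) satisfies $|z|=1$ or $z\in\{0,\infty\}$. Let $\beta\in\mathbb{C}^E$ with $e^{2\pi i\beta_i}=b_i$. Then the meromorphic function $t\mapsto W_{D,\mu}(\beta/N+t)$ on $\mathbb{C}^E$ has no poles at points $t\in\mathbb{R}^E$.
   Context: Open diagram, segments, crossing labels, sign and segment equations: $D$ is an oriented blackboard-framed 1-1 tangle diagram whose closure is $K$; segments are edges of the underlying 4-valent graph; the two segments meeting the boundary are boundary segments (joined into one segment in the closure); $E$ is the set of internal segments. At a crossing with both strands oriented left to right: incoming top-left $1$, incoming bottom-left $2$, outgoing bottom-right $1'$ (continuation of $1$), outgoing top-right $2'$ (continuation of $2$); sign $\epsilon=+1$ if $1\to1'$ is over, $-1$ if $2\to2'$ is over. Shape parameters: $z_{\mathrm N}=(b_{2'}/b_1)^\epsilon$, $z_{\mathrm S}=(b_2/b_{1'})^\epsilon$, $z_{\mathrm W}=(b_2/(mb_1))^\epsilon$, $z_{\mathrm E}=(mb_{2'}/b_{1'})^\epsilon$. Segment values $a_1=m^\epsilon\frac{1-z_{\mathrm W}}{1-z_{\mathrm N}}$, $a_{2'}=m^{-\epsilon}\frac{1-z_{\mathrm E}}{1-z_{\mathrm N}}$, $a_2=m^{-\epsilon}\frac{1-z_{\mathrm S}}{1-z_{\mathrm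 W}}$, $a_{1'}=m^{\epsilon}\frac{1-z_{\mathrm S}}{1-z_{\mathrm E}}$; the segment equations require the two values assigned to each segment of the closure (from its two end crossings) to agree. Quantum dilogarithm: for $\mathsf b>0$ let $c_{\mathsf b}=\frac i2(\mathsf b+\mathsf b^{-1})$ and $\Phi_{\mathsf b}(z)=\exp\int_{\mathbb{R}+i0}\frac{e^{-2izw}}{4\sinh(w\mathsf b)\sinh(w/\mathsf b)}\frac{dw}{w}$ for $|\operatorname{Im}z|<|\operatorname{Im}c_{\mathsf b}|$, extended to a meromorphic function on $\mathbb{C}$ (Faddeev's noncompact quantum dilogarithm). Set $E_N(t)=\Phi_{\sqrt N}(i\sqrt N\,t-c_{\sqrt N}+i/\sqrt N)$; it satisfies $E_N(t)=E_N(t-1/N)/(1-e^{2\pi i t})$, and its zeros and poles lie in $\frac1N\mathbb{Z}$. Crossing weights: for a positive crossing $\Lambda^+(t_1,t_2,t_{1'},t_{2'})=\dfrac{E_N(t_{2'}-t_1)\,E_N(t_2-t_{1'})}{E_N(t_2-t_1-\mu/N+1-1/N)\,E_N(t_{2'}-t_{1'}+\mu/N)}\,e^{2\pi i(1-N)(t_2-t_1-\mu/N)+2\pi i\mu(t_2+t_{1'}-t_1-t_{2'})}$; for a negative crossing $\Lambda^-(t_1,t_2,t_{1'},t_{2'})=\dfrac{E_N(t_1-t_2+\mu/N)\,E_N(t_{1'}-t_{2'}-\mu/N+1-1/N)}{E_N(t_1-t_{2'}+1-1/N)\,E_N(t_{1'}-t_2+1-1/N)}\,e^{-2\pi i(1-N)(t_2-t_1-\mu/N)-2\pi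 i\mu(t_2+t_{1'}-t_1-t_{2'})}$. Weight of the diagram: draw $D$ so that at every crossing both strands point left to right, with finitely many turning points (points of vertical tangent, away from crossings). A turning point that is a leftmost point traversed clockwise or a rightmost point traversed counterclockwise has shift $0$; a leftmost point traversed counterclockwise has shift $1/N-1$; a rightmost point traversed clockwise has shift $1-1/N$. Assign a variable $t_i\in\mathbb{C}$ to each $i\in E$ and $0$ to each boundary segment; this is the value at the segment's initial end, and the value at its final end is this plus the sum of the shifts of the turning points along the segment. At each crossing insert the values at the ends meeting it into $\Lambda^{\epsilon}$ (incoming segments $1,2$ and outgoing $1',2'$). Define the meromorphic function $W_{D,\mu}(t)=\prod_{\text{crossings}}\Lambda^{\epsilon}(\dots)$ on $\mathbb{C}^E$; it equals $\exp(N\,\mathcal S_{D,\mu}(t))$ for the action $\mathcal S_{D,\mu}=\frac1N\sum_{\text{crossings}}\log\Lambda^\epsilon$. *)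

(* Defs.v *)
From Stdlib Require Import Reals List ZArith.
From Coquelicot Require Import Coquelicot.
Import ListNotations.

Local Open Scope C_scope.

Definition cexp (z : C) : C :=
  RtoC (exp (Re z)) * (RtoC (cos (Im z)) + Ci * RtoC (sin (Im z))).
Definition csinh (z : C) : C := (cexp z - cexp (- z)) / RtoC 2.

Definition c_b (b : R) : C := Ci * RtoC ((b + / b) / 2).

(* The contour R + i0 passing above the pole w = 0 is realised as the
   horizontal line Im w = delta_b, with 0 < delta_b < pi * min(b, 1/b)
   (below the nearest nonzero poles of the integrand); by Cauchy's theorem
   the integral does not depend on such a choice. *)
Definition delta_b (b : R) : R := (PI / 2 * Rmin b (/ b))%R.

Definition Phi_integrand (b : R) (z : C) (x : R) : C :=
  let w : C := (x, delta_b b) in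
  cexp (- RtoC 2 * Ci * z * w) / (RtoC 4 * csinh (w * RtoC b) * csinh (w / RtoC b)) / w.

(* Phi_b(z) for |Im z| < Im c_b (the integral formula). *)
Definition Phi_strip (b : R) (z : C) : C :=
  cexp (@RInt_gen C_R_CompleteNormedModule (Phi_integrand b z)
          (Rbar_locally m_infty) (Rbar_locally p_infty)).

Definition Nr (N : nat) : R := INR N.

(* E_N(t) = Phi_{sqrt N}(i sqrt N t - c_{sqrt N} + i / sqrt N), valid (integral
   formula) for -1/N < Re t < 1. *)
Definition E_N_strip (N : nat) (t : C) : C :=
  let b := sqrt (Nr N) in
  Phi_strip b (Ci * RtoC b * t - c_b b + Ci / RtoC b).

Definition cprod (f : nat -> C) (n : nat) : C :=
  fold_right Cmult (RtoC 1) (map f (seq 0 n)).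

(* Meromorphic continuation of E_N to all of C through the functional equation
   E_N(t) = E_N(t - 1/N) / (1 - e^{2 pi i t}): with k = floor(N Re t), the point
   t - k/N has real part in [0, 1/N), inside the strip.  At a pole of E_N the
   division is by 0 (junk value 0 in Coquelicot). *)
Definition E_N (N : nat) (t : C) : C :=
  let k : Z := Int_part (Nr N * Re t) in
  let t0 : C := t - RtoC (IZR k / Nr N) in
  match k with
  | Z0 => E_N_strip N t0
  | Zpos p =>
      E_N_strip N t0 /
      cprod (fun j => RtoC 1 - cexp (RtoC (2 * PI) * Ci * (t - RtoC (INR j / Nr N))))
            (Pos.to_nat p)
  | Zneg p =>
      E_N_strip N t0 *
      cprod (fun j => RtoC 1 - cexp (RtoC (2 * PI) * Ci * (t + RtoC (INR (S j) / Nr N))))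
            (Pos.to_nat p)
  end.

Definition twopii : C := RtoC (2 * PI) * Ci.

Definition Lambda_plus (N : nat) (mu t1 t2 t1' t2' : C) : C :=
  let n : C := RtoC (Nr N) in
  E_N N (t2' - t1) * E_N N (t2 - t1')
  / (E_N N (t2 - t1 - mu / n + RtoC 1 - RtoC 1 / n) * E_N N (t2' - t1' + mu / n))
  * cexp (twopii * (RtoC 1 - n) * (t2 - t1 - mu / n)
          + twopii * mu * (t2 + t1' - t1 - t2')).

Definition Lambda_minus (N : nat) (mu t1 t2 t1' t2' : C) : C :=
  let n : C := RtoC (Nr N) in
  E_N N (t1 - t2 + mu / n) * E_N N (t1' - t2' - mu / n + RtoC 1 - RtoC 1 / n)
  / (E_N N (t1 - t2' + RtoC 1 - RtoC 1 / n) * E_N N (t1' - t2 + RtoC 1 - RtoC 1 / n))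
  * cexp (- (twopii * (RtoC 1 - n) * (t2 - t1 - mu / n))
          - twopii * mu * (t2 + t1' - t1 - t2')).

(* Segments: the incoming boundary segment (starting at the left end point of
   the tangle), the outgoing boundary segment (ending at the right end point),
   and the internal segments Int i, i < nE (so E = {0, ..., nE - 1}). *)
Inductive seg : Type := BdIn | BdOut | Int (i : nat).

Definition seg_eq_dec (s s' : seg) : {s = s'} + {s <> s'}.
Proof. decide equality; apply Nat.eq_dec. Defined.

(* A crossing, drawn with both strands pointing left to right:
   incoming top-left 1, incoming bottom-left 2, outgoing bottom-right 1'
   (continuation of 1), outgoing top-right 2' (continuation of 2);
   positive = true iff 1 -> 1' is the over strand (epsilon = +1). *)
Record crossing : Type := Crossing {
  positive : bool;
  s1 : seg; s2 : seg; s1' : seg; s2' : seg }.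

(* Turning points (points of vertical tangent) *)
Inductive turn : Type :=
  | LeftCW
  | RightCCW
  | LeftCCW
  | RightCW.

Definition turn_shift (N : nat) (tp : turn) : R :=
  match tp with
  | LeftCW | RightCCW => 0%R
  | LeftCCW => (/ Nr N - 1)%R
  | RightCW => (1 - / Nr N)%R
  end.

Record diagram : Type := Diagram {
  nE : nat;
  crossings : list crossing;
  turns : seg -> list turn }.

Definition incoming (D : diagram) : list seg :=
  flat_map (fun c => [s1 c; s2 c]) (crossings D).
Definition outgoing (D : diagram) : list seg :=
  flat_map (fun c => [s1' c; s2' c]) (crossings D).

(* Well-formedness: the crossings are the vertices of a 4-valent graph whose
   edges are the segments; every internal segment has exactly one final end
   (where it is incoming) and one initial end (where it is outgoing) at a
   crossing; the incoming boundary segment ends at exactly one crossing and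
   starts at none, the outgoing one starts at exactly one crossing and ends at
   none (unless the diagram has no crossings). *)
Definition wf_diagram (D : diagram) : Prop :=
  (forall i, (i < nE D)%nat ->
     count_occ seg_eq_dec (incoming D) (Int i) = 1%nat /\
     count_occ seg_eq_dec (outgoing D) (Int i) = 1%nat) /\
  (forall i, (nE D <= i)%nat -> ~ In (Int i) (incoming D) /\ ~ In (Int i) (outgoing D)) /\
  ~ In BdIn (outgoing D) /\ ~ In BdOut (incoming D) /\
  (crossings D <> nil ->
     count_occ seg_eq_dec (incoming D) BdIn = 1%nat /\
     count_occ seg_eq_dec (outgoing D) BdOut = 1%nat) /\
  (crossings D = nil -> nE D = 0%nat).

Definition total_shift (N : nat) (D : diagram) (s : seg) : R :=
  fold_right Rplus 0%R (map (turn_shift N) (turns D s)).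

Definition init_val (D : diagram) (t : nat -> C) (s : seg) : C :=
  match s with Int i => t i | _ => RtoC 0 end.
Definition final_val (N : nat) (D : diagram) (t : nat -> C) (s : seg) : C :=
  init_val D t s + RtoC (total_shift N D s).

Definition crossing_weight (N : nat) (mu : C) (D : diagram) (t : nat -> C)
    (c : crossing) : C :=
  (if positive c then Lambda_plus N mu else Lambda_minus N mu)
    (final_val N D t (s1 c)) (final_val N D t (s2 c))
    (init_val D t (s1' c)) (init_val D t (s2' c)).

Definition W (N : nat) (mu : C) (D : diagram) (t : nat -> C) : C :=
  fold_right Cmult (RtoC 1) (map (crossing_weight N mu D t) (crossings D)).

Definition bval (b : nat -> C) (s : seg) : C :=
  match s with Int i => b i | _ => RtoC 1 end.

Definition meridian (mu : C) : C := cexp (twopii * mu).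

Definition epow (eps : bool) (z : C) : C := if eps then z else / z.

Definition zN (mu : C) (b : nat -> C) (c : crossing) : C :=
  epow (positive c) (bval b (s2' c) / bval b (s1 c)).
Definition zS (mu : C) (b : nat -> C) (c : crossing) : C :=
  epow (positive c) (bval b (s2 c) / bval b (s1' c)).
Definition zW (mu : C) (b : nat -> C) (c : crossing) : C :=
  epow (positive c) (bval b (s2 c) / (meridian mu * bval b (s1 c))).
Definition zE (mu : C) (b : nat -> C) (c : crossing) : C :=
  epow (positive c) (meridian mu * bval b (s2' c) / bval b (s1' c)).

Definition shapes (mu : C) (b : nat -> C) (c : crossing) : list C :=
  [zN mu b c; zS mu b c; zW mu b c; zE mu b c].

Definition a_1 (mu : C) (b : nat -> C) (c : crossing) : C :=
  epow (positive c) (meridian mu) * (RtoC 1 - zW mu b c) / (RtoC 1 - zN mu b c).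
Definition a_2' (mu : C) (b : nat -> C) (c : crossing) : C :=
  epow (negb (positive c)) (meridian mu) * (RtoC 1 - zE mu b c) / (RtoC 1 - zN mu b c).
Definition a_2 (mu : C) (b : nat -> C) (c : crossing) : C :=
  epow (negb (positive c)) (meridian mu) * (RtoC 1 - zS mu b c) / (RtoC 1 - zW mu b c).
Definition a_1' (mu : C) (b : nat -> C) (c : crossing) : C :=
  epow (positive c) (meridian mu) * (RtoC 1 - zS mu b c) / (RtoC 1 - zE mu b c).

Definition in_values (mu : C) (b : nat -> C) (c : crossing) : list (seg * C) :=
  [(s1 c, a_1 mu b c); (s2 c, a_2 mu b c)].
Definition out_values (mu : C) (b : nat -> C) (c : crossing) : list (seg * C) :=
  [(s1' c, a_1' mu b c); (s2' c, a_2' mu b c)].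

(* s (at its final end) and s' (at its initial end) are the two ends of the same
   segment of the closure K: same segment, or the two boundary segments, which
   are joined in the closure (BdOut's initial end, BdIn's final end). *)
Definition same_closure_segment (s s' : seg) : Prop :=
  s = s' \/ (s = BdIn /\ s' = BdOut).

Definition segment_equations (D : diagram) (mu : C) (b : nat -> C) : Prop :=
  forall c c' s s' v v',
    In c (crossings D) -> In c' (crossings D) ->
    In (s, v) (in_values mu b c) -> In (s', v') (out_values mu b c') ->
    same_closure_segment s s' -> v = v'.

(* A meromorphic function f on C^E (E = {0..nE-1}) has no pole at p iff it is
   (holomorphic, equivalently, by the Riemann extension theorem) bounded on a
   neighbourhood of p. *)
Definition no_pole_at (nE : nat) (f : (nat -> C) -> C) (p : nat -> C) : Prop :=
  exists delta : R, (0 < delta)%R /\ exists M : R,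
    forall x : nat -> C,
      (forall i, (i < nE)%nat -> (Cmod (x i - p i) < delta)%R) ->
      (Cmod (f x) <= M)%R.

(* Main.v *)
Require Import Defs.
From Stdlib Require Import Reals List Lra Lia ZArith.
From Coquelicot Require Import Coquelicot.
Import ListNotations.

Open Scope R_scope.



Lemma prod_norm_Cmod (z : C) : @norm R_AbsRing C_R_NormedModule z = Cmod z.
Proof.
  destruct z as [a b]. unfold norm. simpl. unfold prod_norm, Cmod. simpl.
  assert (H : forall r : R, norm r * (norm r * 1) = r * (r * 1)).
  { intros r. change (norm r) with (Rabs r). rewrite Rmult_1_r, Rmult_1_r, <- Rabs_mult.
    apply Rabs_pos_eq. nra. }
  rewrite !H. reflexivity.
Qed.

Section Tails.
Variable f : R -> C.
Variables Cg k : R.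
Hypothesis Hk : 0 < k.
Hypothesis HC : 0 <= Cg.
Hypothesis Hex : forall a b, @ex_RInt C_R_CompleteNormedModule f a b.
Hypothesis Hb : forall x, Cmod (f x) <= Cg * exp (- k * Rabs x).

Definition T (M : R) := Cg / k * exp (- k * M).

Lemma tail_pos_le (M u v : R) : 0 <= M -> M <= u -> u <= v ->
  norm (@RInt C_R_CompleteNormedModule f u v) <= T M.
Proof.
  intros HM Hu Huv.
  set (G := fun x : R => - (Cg / k) * exp (- k * x)).
  set (g := fun x : R => Cg * exp (- k * x)).
  assert (HG : is_RInt g u v (minus (G v) (G u))).
  { apply (is_RInt_derive G g).
    - intros x _. unfold G, g. auto_derive; [exact I | field; lra].
    - intros x _. apply (continuity_pt_filterlim g x). unfold g. reg. }
  eapply Rle_trans.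
  - apply (@norm_RInt_le C_R_NormedModule f g u v _ _ Huv).
    + intros x [Hx1 Hx2]. rewrite prod_norm_Cmod. eapply Rle_trans; [apply Hb|].
      unfold g. rewrite Rabs_pos_eq by lra. lra.
    + exact (@RInt_correct C_R_CompleteNormedModule f u v (Hex u v)).
    + exact HG.
  - unfold minus, plus, opp; simpl. unfold G, T.
    assert (exp (- k * u) <= exp (- k * M)).
    { destruct (Req_dec u M). subst; lra. left; apply exp_increasing; nra. }
    assert (0 <= Cg / k) by (apply Rdiv_le_0_compat; lra).
    generalize (exp_pos (- k * v)); intros. nra.
Qed.

Lemma tail_neg_le (M u v : R) : 0 <= M -> u <= -M -> u <= v -> v <= - M ->
  norm (@RInt C_R_CompleteNormedModule f u v) <= T M.
Proof.
  intros HM Hu Huv Hv.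
  set (G := fun x : R => (Cg / k) * exp (k * x)).
  set (g := fun x : R => Cg * exp (k * x)).
  assert (HG : is_RInt g u v (minus (G v) (G u))).
  { apply (is_RInt_derive G g).
    - intros x _. unfold G, g. auto_derive; [exact I | field; lra].
    - intros x _. apply (continuity_pt_filterlim g x). unfold g. reg. }
  eapply Rle_trans.
  - apply (@norm_RInt_le C_R_NormedModule f g u v _ _ Huv).
    + intros x [Hx1 Hx2]. rewrite prod_norm_Cmod. eapply Rle_trans; [apply Hb|].
      unfold g. rewrite Rabs_left1 by lra. replace (- k * - x) with (k * x) by ring. lra.
    + exact (@RInt_correct C_R_CompleteNormedModule f u v (Hex u v)).
    + exact HG.
  - unfold minus, plus, opp; simpl. unfold G, T.
    assert (exp (k * v) <= exp (- k * M)).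
    { destruct (Req_dec v (- M)). subst; right; f_equal; ring. left; apply exp_increasing; nra. }
    assert (0 <= Cg / k) by (apply Rdiv_le_0_compat; lra).
    generalize (exp_pos (k * u)); intros. nra.
Qed.

Lemma norm_RInt_swap (u v : R) :
  norm (@RInt C_R_CompleteNormedModule f u v) = norm (@RInt C_R_CompleteNormedModule f v u).
Proof. rewrite <- opp_RInt_swap by apply Hex. exact (@norm_opp R_AbsRing C_R_NormedModule _). Qed.

Lemma tail_pos (M u v : R) : 0 <= M -> M <= u -> M <= v ->
  norm (@RInt C_R_CompleteNormedModule f u v) <= T M.
Proof.
  intros. destruct (Rle_dec u v). apply tail_pos_le; lra.
  rewrite norm_RInt_swap. apply tail_pos_le; lra.
Qed.

Lemma tail_neg (M u v : R) : 0 <= M -> u <= - M -> v <= - M ->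
  norm (@RInt C_R_CompleteNormedModule f u v) <= T M.
Proof.
  intros. destruct (Rle_dec u v). apply tail_neg_le; lra.
  rewrite norm_RInt_swap. apply tail_neg_le; lra.
Qed.

Lemma T_small (eps : R) : 0 < eps -> exists M, 0 <= M /\ 2 * T M < eps.
Proof.
  intros He. set (M := 2 * Cg / (k * k * eps) + 1).
  assert (HM0 : 0 < M). { unfold M. assert (0 <= 2 * Cg / (k * k * eps)). { apply Rdiv_le_0_compat; [lra| ]. apply Rmult_lt_0_compat; [nra|lra]. } lra. }
  exists M. split; [lra|]. unfold T.
  assert (H1 : 1 + k * M < exp (k * M)) by (apply exp_ineq1; nra).
  replace (- k * M) with (- (k * M)) by ring.
  rewrite exp_Ropp.
  assert (HMe : 2 * Cg < k * k * eps * M).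
  { unfold M. assert (0 < k * k * eps) by (apply Rmult_lt_0_compat; [nra|lra]).
    replace (k * k * eps * (2 * Cg / (k * k * eps) + 1)) with (2 * Cg + k * k * eps) by (field; lra).
    lra. }
  assert (HkM : 0 < k * M) by nra.
  assert (Hinv : / exp (k * M) <= / (k * M)) by (apply Rinv_le_contravar; lra).
  assert (0 <= Cg / k) by (apply Rdiv_le_0_compat; lra).
  apply Rle_lt_trans with (2 * (Cg / k * / (k * M))).
  - apply Rmult_le_compat_l; [lra|]. apply Rmult_le_compat_l; lra.
  - replace (2 * (Cg / k * / (k * M))) with (2 * Cg / (k * k * M)) by (field; lra).
    apply Rmult_lt_reg_r with (k * k * M); [nra|].
    replace (2 * Cg / (k * k * M) * (k * k * M)) with (2 * Cg) by (field; lra). nra.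
Qed.
End Tails.

Lemma Fprod_ev (M : R) :
  filter_prod (Rbar_locally m_infty) (Rbar_locally p_infty)
    (fun ab : R * R => fst ab < - M /\ M < snd ab).
Proof.
  apply (Filter_prod _ _ _ (fun a => a < - M) (fun b => M < b)).
  - exists (- M). auto.
  - exists M. auto.
  - intros a b Ha Hb. simpl. auto.
Qed.

Lemma improper_bound (f : R -> C) (Cg k : R) :
  0 < k -> 0 <= Cg ->
  (forall a b, @ex_RInt C_R_CompleteNormedModule f a b) ->
  (forall x, Cmod (f x) <= Cg * exp (- k * Rabs x)) ->
  Cmod (@RInt_gen C_R_CompleteNormedModule f (Rbar_locally m_infty) (Rbar_locally p_infty))
    <= 2 * Cg / k.
Proof.
  intros Hk HC Hex Hb.
  set (F := filter_prod (Rbar_locally m_infty) (Rbar_locally p_infty)).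
  assert (PF : ProperFilter F) by (apply filter_prod_proper; apply Rbar_locally_filter).
  assert (Hfun : F (fun ab : R * R =>
     (exists y : C_R_CompleteNormedModule, is_RInt f (fst ab) (snd ab) y) /\
     (forall y1 y2 : C_R_CompleteNormedModule, is_RInt f (fst ab) (snd ab) y1 ->
        is_RInt f (fst ab) (snd ab) y2 -> y1 = y2))).
  { apply filter_forall. intros [a b]. simpl. split.
    - exists (@RInt C_R_CompleteNormedModule f a b). apply (@RInt_correct C_R_CompleteNormedModule). apply Hex.
    - intros y1 y2 H1 H2. rewrite <- ((@is_RInt_unique C_R_CompleteNormedModule) _ _ _ _ H1). apply (@is_RInt_unique C_R_CompleteNormedModule). exact H2. }
  destruct (proj1 (filterlimi_locally_cauchy (fun ab : R * R => @is_RInt C_R_CompleteNormedModule f (fst ab) (snd ab)) Hfun)) as [y Hy].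
  { intros eps. destruct (T_small Cg k Hk HC eps (cond_pos eps)) as [M [HM HTM]].
    exists (fun ab : R * R => fst ab < - M /\ M < snd ab). split.
    - apply Fprod_ev.
    - intros [u1 u2] [v1 v2] [Hu1 Hu2] [Hv1 Hv2] u' v' H1 H2. simpl in *.
      rewrite <- ((@is_RInt_unique C_R_CompleteNormedModule) _ _ _ _ H1), <- ((@is_RInt_unique C_R_CompleteNormedModule) _ _ _ _ H2).
      apply (@norm_compat1 R_AbsRing C_R_NormedModule).
      rewrite <- (@RInt_Chasles C_R_CompleteNormedModule f v1 u1 v2) by apply Hex.
      rewrite <- (@RInt_Chasles C_R_CompleteNormedModule f u1 u2 v2) by apply Hex.
      set (A := @RInt C_R_CompleteNormedModule f v1 u1). set (I := @RInt C_R_CompleteNormedModule f u1 u2). set (B := @RInt C_R_CompleteNormedModule f u2 v2).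
      assert (E : minus (plus A (plus I B)) I = plus A B).
      { clearbody A I B. destruct A, I, B. apply injective_projections; simpl; unfold plus, opp; simpl; ring. }
      match goal with |- Rlt (norm ?t) _ => replace t with (plus A B) by (clearbody A I B; destruct A, I, B; apply injective_projections; simpl; unfold plus, opp; simpl; ring) end. eapply Rle_lt_trans; [exact (@norm_triangle R_AbsRing C_R_NormedModule A B)|].
      assert (@norm R_AbsRing C_R_NormedModule A <= T Cg k M) by
        exact (tail_neg f Cg k Hk HC Hex Hb M v1 u1 HM ltac:(lra) ltac:(lra)).
      assert (@norm R_AbsRing C_R_NormedModule B <= T Cg k M) by
        exact (tail_pos f Cg k Hk HC Hex Hb M u2 v2 HM ltac:(lra) ltac:(lra)).
      lra. }
  assert (HyG : is_RInt_gen f (Rbar_locally m_infty) (Rbar_locally p_infty) y) by exact Hy.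
  rewrite (@is_RInt_gen_unique C_R_CompleteNormedModule _ _ _ _ f y) by (try apply Proper_StrongProper; try apply Rbar_locally_filter; exact HyG).
  rewrite <- prod_norm_Cmod.
  apply le_epsilon. intros eps He.
  assert (Hnf := @norm_factor_gt_0 R_AbsRing C_R_NormedModule).
  set (pe := mkposreal (eps / norm_factor) (Rdiv_lt_0_compat _ _ He Hnf)).
  destruct (filter_ex _ (filter_and _ _ (proj1 (filterlimi_locally _ y) Hy pe) (Fprod_ev 0)))
    as [[a b] [[z [Hz Hball]] [Ha Hb']]]. simpl in *.
  assert (Hz' : z = plus (@RInt C_R_CompleteNormedModule f a 0) (@RInt C_R_CompleteNormedModule f 0 b)).
  { rewrite (@RInt_Chasles C_R_CompleteNormedModule) by apply Hex. symmetry. apply (@is_RInt_unique C_R_CompleteNormedModule). exact Hz. }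
  assert (Hnz : @norm R_AbsRing C_R_NormedModule z <= 2 * Cg / k).
  { rewrite Hz'. eapply Rle_trans;
      [exact (@norm_triangle R_AbsRing C_R_NormedModule (@RInt C_R_CompleteNormedModule f a 0) (@RInt C_R_CompleteNormedModule f 0 b))|].
    assert (@norm R_AbsRing C_R_NormedModule (@RInt C_R_CompleteNormedModule f a 0) <= T Cg k 0) by
      exact (tail_neg f Cg k Hk HC Hex Hb 0 a 0 (Rle_refl 0) ltac:(lra) ltac:(lra)).
    assert (@norm R_AbsRing C_R_NormedModule (@RInt C_R_CompleteNormedModule f 0 b) <= T Cg k 0) by
      exact (tail_pos f Cg k Hk HC Hex Hb 0 0 b (Rle_refl 0) ltac:(lra) ltac:(lra)).
    unfold T in *. rewrite Rmult_0_r, exp_0 in *. lra. }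
  assert (Hd := @norm_compat2 R_AbsRing C_R_NormedModule _ _ pe Hball). simpl in Hd.
  replace (norm_factor * (eps / norm_factor)) with eps in Hd by (field; lra).
  assert (Ht := @norm_triangle_inv R_AbsRing C_R_NormedModule z y).
  generalize (Rle_abs (@norm R_AbsRing C_R_NormedModule y - @norm R_AbsRing C_R_NormedModule z)). intros.
  rewrite Rabs_minus_sym in Ht. lra.
Qed.
Definition Ccont (f : R -> C) (x : R) : Prop :=
  continuity_pt (fun y => fst (f y)) x /\ continuity_pt (fun y => snd (f y)) x.

Lemma Ccont_cont (f : R -> C) x :
  Ccont f x -> @continuous R_UniformSpace C_R_CompleteNormedModule f x.
Proof.
  intros [H1 H2]. apply continuity_pt_filterlim in H1.
  apply continuity_pt_filterlim in H2. unfold continuous.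
  apply filterlim_locally. intros eps.
  apply filterlim_locally with (eps := eps) in H1.
  apply filterlim_locally with (eps := eps) in H2.
  generalize (filter_and _ _ H1 H2). apply filter_imp.
  intros y [Ha Hb]. split; assumption.
Qed.

Lemma Ccont_const (c : C) x : Ccont (fun _ => c) x.
Proof. split; apply continuity_pt_const; intros a b; reflexivity. Qed.

Lemma Ccont_RtoC (r : R -> R) x : continuity_pt r x -> Ccont (fun y => RtoC (r y)) x.
Proof. intros H; split; [exact H | apply continuity_pt_const; intros a b; reflexivity]. Qed.

Lemma Ccont_pair (r s : R -> R) x : continuity_pt r x -> continuity_pt s x ->
  Ccont (fun y => (r y, s y)) x.
Proof. intros H1 H2; split; assumption. Qed.

Lemma Ccont_plus f g x : Ccont f x -> Ccont g x -> Ccont (fun y => Cplus (f y) (g y)) x.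
Proof.
  intros [F1 F2] [G1 G2]; split.
  - exact (continuity_pt_plus (fun y => fst (f y)) (fun y => fst (g y)) x F1 G1).
  - exact (continuity_pt_plus (fun y => snd (f y)) (fun y => snd (g y)) x F2 G2).
Qed.

Lemma Ccont_opp f x : Ccont f x -> Ccont (fun y => Copp (f y)) x.
Proof.
  intros [F1 F2]; split.
  - exact (continuity_pt_opp (fun y => fst (f y)) x F1).
  - exact (continuity_pt_opp (fun y => snd (f y)) x F2).
Qed.

Lemma Ccont_minus f g x : Ccont f x -> Ccont g x -> Ccont (fun y => Cminus (f y) (g y)) x.
Proof. intros; apply Ccont_plus; [ | apply Ccont_opp]; assumption. Qed.

Lemma Ccont_mult f g x : Ccont f x -> Ccont g x -> Ccont (fun y => Cmult (f y) (g y)) x.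
Proof.
  intros [F1 F2] [G1 G2]; split.
  - exact (continuity_pt_minus _ _ x
      (continuity_pt_mult (fun y => fst (f y)) (fun y => fst (g y)) x F1 G1)
      (continuity_pt_mult (fun y => snd (f y)) (fun y => snd (g y)) x F2 G2)).
  - exact (continuity_pt_plus _ _ x
      (continuity_pt_mult (fun y => fst (f y)) (fun y => snd (g y)) x F1 G2)
      (continuity_pt_mult (fun y => snd (f y)) (fun y => fst (g y)) x F2 G1)).
Qed.

Lemma Ccont_inv f x : Ccont f x -> f x <> RtoC 0 -> Ccont (fun y => Cinv (f y)) x.
Proof.
  intros [F1 F2] Hn.
  assert (Hd : fst (f x) ^ 2 + snd (f x) ^ 2 <> 0).
  { intros H. apply Hn. destruct (f x) as [a b]; simpl in *.
    assert (a = 0) by nra. assert (b = 0) by nra. subst. reflexivity. }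
  assert (HD : continuity_pt (fun y => fst (f y) ^ 2 + snd (f y) ^ 2) x).
  { apply (continuity_pt_plus (fun y => fst (f y) ^ 2) (fun y => snd (f y) ^ 2));
    [ exact (continuity_pt_mult _ _ x F1 (continuity_pt_mult _ _ x F1 (continuity_pt_const (fun _ => 1) x (fun a b => eq_refl))))
    | exact (continuity_pt_mult _ _ x F2 (continuity_pt_mult _ _ x F2 (continuity_pt_const (fun _ => 1) x (fun a b => eq_refl))))]. }
  split.
  - exact (continuity_pt_div (fun y => fst (f y)) _ x F1 HD Hd).
  - exact (continuity_pt_div (fun y => - snd (f y)) _ x (continuity_pt_opp _ x F2) HD Hd).
Qed.

Lemma Ccont_div f g x : Ccont f x -> Ccont g x -> g x <> RtoC 0 ->
  Ccont (fun y => Cdiv (f y) (g y)) x.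
Proof. intros; apply Ccont_mult; [ | apply Ccont_inv]; assumption. Qed.

Lemma Ccont_cexp f x : Ccont f x -> Ccont (fun y => cexp (f y)) x.
Proof.
  intros [F1 F2]. unfold cexp. apply Ccont_mult.
  - apply Ccont_RtoC. exact (continuity_pt_comp _ exp x F1 (derivable_continuous_pt _ _ (derivable_pt_exp _))).
  - apply Ccont_plus.
    + apply Ccont_RtoC. exact (continuity_pt_comp _ cos x F2 (derivable_continuous_pt _ _ (derivable_pt_cos _))).
    + apply Ccont_mult. apply Ccont_const.
      apply Ccont_RtoC. exact (continuity_pt_comp _ sin x F2 (derivable_continuous_pt _ _ (derivable_pt_sin _))).
Qed.

Lemma Ccont_csinh f x : Ccont f x -> Ccont (fun y => csinh (f y)) x.
Proof.
  intros H. unfold csinh. apply Ccont_div.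
  - apply Ccont_minus; apply Ccont_cexp; [exact H | apply Ccont_opp; exact H].
  - apply Ccont_const.
  - intros E. injection E. lra.
Qed.
Lemma cexp_eq (u : C) : cexp u = (exp (fst u) * cos (snd u), exp (fst u) * sin (snd u)).
Proof. unfold cexp. destruct u as [a c]. apply injective_projections; simpl; ring. Qed.

Lemma Cmod_cexp (u : C) : Cmod (cexp u) = exp (fst u).
Proof.
  rewrite cexp_eq. unfold Cmod. simpl.
  replace (exp (fst u) * cos (snd u) * (exp (fst u) * cos (snd u) * 1) +
     exp (fst u) * sin (snd u) * (exp (fst u) * sin (snd u) * 1))
    with (exp (fst u) * exp (fst u)).
  - apply sqrt_square. left; apply exp_pos.
  - generalize (sin2_cos2 (snd u)). unfold Rsqr. intros H. nra.
Qed.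

Lemma cexp_neq0 (u : C) : cexp u <> RtoC 0.
Proof.
  intros H. generalize (Cmod_cexp u). rewrite H, Cmod_0. generalize (exp_pos (fst u)). lra.
Qed.

Lemma csinh_eq (a c : R) : csinh (a, c) =
  ((exp a - exp (- a)) / 2 * cos c, (exp a + exp (- a)) / 2 * sin c).
Proof.
  unfold csinh. rewrite !cexp_eq. simpl.
  rewrite cos_neg, sin_neg.
  apply injective_projections; simpl; field.
Qed.

Lemma Cmod_csinh_lb (a c : R) : sin c <> 0 ->
  Rmin (1/4) (Rabs (sin c) / 2) * exp (Rabs a) <= Cmod (csinh (a, c)).
Proof.
  intros Hs. rewrite csinh_eq. unfold Cmod. simpl.
  set (X := exp a). set (Y := exp (-a)).
  assert (HXY : X * Y = 1) by (unfold X, Y; rewrite <- exp_plus; replace (a + - a) with 0 by ring; apply exp_0).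
  assert (HX : 0 < X) by apply exp_pos. assert (HY : 0 < Y) by apply exp_pos.
  assert (HE : exp (Rabs a) = Rmax X Y).
  { unfold Rabs; destruct (Rcase_abs a).
    - rewrite Rmax_right. reflexivity. unfold X, Y; left; apply exp_increasing; lra.
    - rewrite Rmax_left. reflexivity. unfold X, Y. destruct (Req_dec a 0).
      + subst; rewrite Ropp_0; lra.
      + left; apply exp_increasing; lra. }
  rewrite HE.
  assert (Hsc := sin2_cos2 c). unfold Rsqr in Hsc.
  set (s := sin c) in *. set (co := cos c) in *.
  set (k := Rmin (1/4) (Rabs s / 2)).
  assert (Hk0 : 0 < k). { unfold k, Rmin. destruct (Rle_dec _ _). lra. generalize (Rabs_pos_lt s Hs). lra. }
  assert (Hk1 : k <= 1/4) by (unfold k; apply Rmin_l).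
  assert (Hk2 : k <= Rabs s / 2) by (unfold k; apply Rmin_r).
  assert (Hss : Rabs s * Rabs s = s * s) by (rewrite <- Rabs_mult; apply Rabs_pos_eq; nra).
  set (E := Rmax X Y).
  assert (HE1 : E * (X + Y - E) = 1).
  { unfold E, Rmax. destruct (Rle_dec X Y); nra. }
  assert (HE2 : 1 <= E). { unfold E, Rmax. destruct (Rle_dec X Y); nra. }
  assert (Hval : (X - Y) / 2 * co * ((X - Y) / 2 * co * 1) + (X + Y) / 2 * s * ((X + Y) / 2 * s * 1)
      = (X - Y) * (X - Y) / 4 + s * s).
  { field_simplify. nra. }
  rewrite Hval.
  rewrite <- (sqrt_square (k * E)) by (apply Rmult_le_pos; lra).
  apply sqrt_le_1_alt.
  assert (Hd : (X - Y) * (X - Y) = (E - (X + Y - E)) * (E - (X + Y - E))).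
  { unfold E, Rmax. destruct (Rle_dec X Y); ring. }
  rewrite Hd. set (F := X + Y - E) in *.
  assert (HF : F = / E) by (field_simplify_eq; [lra | lra]).
  destruct (Rle_dec 2 E).
  - assert (F <= 1/2). { rewrite HF. apply Rmult_le_reg_l with E; [lra|]. field_simplify; lra. }
    assert (0 < F) by (rewrite HF; apply Rinv_0_lt_compat; lra).
    assert (k * k <= 1/16) by nra.
    assert ((E - F) * (E - F) >= (3 * E / 4) * (3 * E / 4)) by nra.
    assert (k * E * (k * E) = (k * k) * (E * E)) by ring.
    assert ((k * k) * (E * E) <= 1/16 * (E * E)) by (apply Rmult_le_compat_r; nra).
    assert (0 <= s * s) by nra.
    nra.
  - assert (k * k <= s * s / 4) by nra.
    assert (E < 2) by lra.
    assert (k * E * (k * E) = (k * k) * (E * E)) by ring.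
    assert ((k * k) * (E * E) <= (s * s / 4) * (E * E)) by (apply Rmult_le_compat_r; nra).
    assert ((s * s / 4) * (E * E) <= s * s).
    { assert (0 <= s*s) by nra. assert (E * E <= 4) by nra.
      replace ((s * s / 4) * (E * E)) with ((s * s) * (E * E / 4)) by field.
      rewrite <- (Rmult_1_r (s * s)) at 2. apply Rmult_le_compat_l; lra. }
    assert (0 <= (E - F) * (E - F)) by apply Rle_0_sqr.
    lra.
Qed.

Open Scope R_scope.

Lemma Cmod_pos_neq0 (z : C) : 0 < Cmod z -> z <> RtoC 0.
Proof. intros H E. rewrite E, Cmod_0 in H. lra. Qed.

Lemma Cmod_pair_snd (x d : R) : 0 < d -> d <= Cmod (x, d).
Proof. intros Hd. generalize (Rmax_Cmod (x, d)). simpl. intros H.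
  eapply Rle_trans; [|exact H]. rewrite (Rabs_pos_eq d) by lra. apply Rmax_r. Qed.

Lemma exp_mono (a b : R) : a <= b -> exp a <= exp b.
Proof. intros [H|H]; [left; apply exp_increasing; exact H | subst; lra]. Qed.

Section Strip.
Variable bb : R.
Hypothesis Hbb : sqrt 2 <= bb.

Lemma bb_gt1 : 1 < bb.
Proof.
  assert (1 < sqrt 2). { rewrite <- sqrt_1. apply sqrt_lt_1_alt. lra. }
  lra.
Qed.

Lemma bb_sq : 2 <= bb * bb.
Proof.
  assert (0 <= sqrt 2) by apply sqrt_pos.
  assert (sqrt 2 * sqrt 2 = 2) by (apply sqrt_sqrt; lra).
  nra.
Qed.

Lemma delta_eq : delta_b bb = PI / 2 * / bb.
Proof.
  unfold delta_b. f_equal. apply Rmin_right. generalize bb_gt1; intros.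
  apply Rle_trans with 1; [|lra]. rewrite <- Rinv_1. left. apply Rinv_lt_contravar; lra.
Qed.

Definition dd := PI / 2 * / bb.
Lemma dd_pos : 0 < dd.
Proof. unfold dd. generalize PI_RGT_0 bb_gt1; intros. apply Rmult_lt_0_compat; [lra|]. apply Rinv_0_lt_compat; lra. Qed.

Lemma sin1 : sin (dd * bb) <> 0.
Proof. unfold dd. replace (PI / 2 * / bb * bb) with (PI / 2) by (field; generalize bb_gt1; lra).
  rewrite sin_PI2. lra. Qed.

Lemma sin2 : sin (dd / bb) <> 0.
Proof.
  assert (0 < dd / bb < PI).
  { generalize bb_gt1 bb_sq PI_RGT_0; intros. unfold dd. split.
    - apply Rdiv_lt_0_compat; [|lra]. apply Rmult_lt_0_compat; [lra|]. apply Rinv_0_lt_compat; lra.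
    - replace (PI / 2 * / bb / bb) with (PI * / (2 * (bb * bb))) by (field; lra).
      rewrite <- (Rmult_1_r PI) at 2. apply Rmult_lt_compat_l; [lra|].
      rewrite <- Rinv_1. apply Rinv_lt_contravar; lra. }
  generalize (sin_gt_0 _ (proj1 H) (proj2 H)). lra.
Qed.

Definition k1 := Rmin (1/4) (Rabs (sin (dd * bb)) / 2).
Definition k2 := Rmin (1/4) (Rabs (sin (dd / bb)) / 2).
Lemma k_pos (s : R) : s <> 0 -> 0 < Rmin (1/4) (Rabs s / 2).
Proof. intros. unfold Rmin. destruct (Rle_dec _ _). lra. generalize (Rabs_pos_lt s H). lra. Qed.

Lemma w_mul (x : R) : Cmult (x, dd) (RtoC bb) = (x * bb, dd * bb).
Proof. apply injective_projections; simpl; ring. Qed.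
Lemma w_div (x : R) : Cdiv (x, dd) (RtoC bb) = (x / bb, dd / bb).
Proof. generalize bb_gt1; intros. apply injective_projections; simpl; field; lra. Qed.

Lemma S1_lb (x : R) : k1 * exp (bb * Rabs x) <= Cmod (csinh (Cmult (x, dd) (RtoC bb))).
Proof.
  rewrite w_mul. eapply Rle_trans; [|apply Cmod_csinh_lb, sin1]. unfold k1.
  right. f_equal. f_equal. rewrite Rabs_mult, (Rabs_pos_eq bb) by (generalize bb_gt1; lra). ring.
Qed.

Lemma S2_lb (x : R) : k2 * exp (Rabs x / bb) <= Cmod (csinh (Cdiv (x, dd) (RtoC bb))).
Proof.
  rewrite w_div. eapply Rle_trans; [|apply Cmod_csinh_lb, sin2]. unfold k2.
  right. f_equal. f_equal. unfold Rdiv. rewrite Rabs_mult, Rabs_inv, (Rabs_pos_eq bb) by (generalize bb_gt1; lra). reflexivity.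
Qed.

Lemma re_arg (z : C) (x : R) :
  fst (Copp (RtoC 2) * Ci * z * (x, dd))%C = 2 * (fst z * dd + snd z * x).
Proof. destruct z; simpl; ring. Qed.

Lemma denom_pos (x : R) :
  0 < Cmod (RtoC 4 * csinh (Cmult (x, dd) (RtoC bb)) * csinh (Cdiv (x, dd) (RtoC bb)))%C.
Proof.
  rewrite !Cmod_mult, Cmod_R, Rabs_pos_eq by lra.
  generalize (S1_lb x) (S2_lb x) (k_pos _ sin1) (k_pos _ sin2) (exp_pos (bb * Rabs x)) (exp_pos (Rabs x / bb)).
  unfold k1, k2. intros. apply Rmult_lt_0_compat; [apply Rmult_lt_0_compat; [lra|]|]; nra.
Qed.

Definition kap := 2 / bb.
Lemma kap_pos : 0 < kap.
Proof. unfold kap. generalize bb_gt1; intros. apply Rdiv_lt_0_compat; lra. Qed.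

Lemma integrand_bound (z : C) (A : R) :
  Rabs (fst z) <= A ->
  (/ bb - bb) / 2 <= snd z <= (/ bb - bb) / 2 + / bb ->
  forall x, Cmod (Phi_integrand bb z x) <=
     exp (2 * A * dd) / (4 * k1 * k2 * dd) * exp (- kap * Rabs x).
Proof.
  intros HA Hz x. unfold Phi_integrand. rewrite delta_eq. fold dd.
  set (S1 := csinh (Cmult (x, dd) (RtoC bb))).
  set (S2 := csinh (Cdiv (x, dd) (RtoC bb))).
  assert (HD := denom_pos x). fold S1 S2 in HD.
  assert (Hw : 0 < Cmod (x, dd)) by (generalize (Cmod_pair_snd x dd dd_pos); generalize dd_pos; lra).
  unfold Cdiv. rewrite !Cmod_mult, !Cmod_inv by (apply Cmod_pos_neq0; assumption).
  rewrite Cmod_cexp, re_arg.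
  rewrite !Cmod_mult, Cmod_R, Rabs_pos_eq by lra.
  rewrite !Cmod_mult, Cmod_R, Rabs_pos_eq in HD by lra.
  assert (H1 := S1_lb x). assert (H2 := S2_lb x). fold S1 S2 in H1, H2.
  assert (Hk1 := k_pos _ sin1). assert (Hk2 := k_pos _ sin2). fold k1 k2 in Hk1, Hk2.
  assert (Hwd := Cmod_pair_snd x dd dd_pos).
  assert (Hdd := dd_pos).
  set (e1 := exp (bb * Rabs x)) in *. set (e2 := exp (Rabs x / bb)) in *.
  set (e3 := exp (- kap * Rabs x)).
  assert (He1 : 0 < e1) by apply exp_pos. assert (He2 : 0 < e2) by apply exp_pos.
  assert (He3 : 0 < e3) by apply exp_pos.
  assert (HP : exp (2 * (fst z * dd + snd z * x)) <= exp (2 * A * dd) * (e1 * e2 * e3)).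
  { unfold e1, e2, e3. rewrite <- !exp_plus. apply exp_mono.
    assert (Hib : 0 < / bb) by (apply Rinv_0_lt_compat; generalize bb_gt1; lra).
    assert (Hbi : bb * / bb = 1) by (field; generalize bb_gt1; lra).
    assert (Hsq := bb_sq).
    assert (Hib2 : / bb <= bb / 2) by nra.
    assert (HzA : fst z <= A) by (generalize (Rle_abs (fst z)); lra).
    assert (fst z * dd <= A * dd) by (apply Rmult_le_compat_r; lra).
    unfold kap, Rdiv. replace (2 * / bb) with (2 * (/ bb)) by ring.
    destruct (Rle_dec 0 x).
    - rewrite Rabs_pos_eq by lra.
      assert (snd z * x <= ((/ bb - bb) / 2 + / bb) * x) by (apply Rmult_le_compat_r; lra).
      assert (/ bb * x <= bb / 2 * x) by (apply Rmult_le_compat_r; lra).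
      nra.
    - rewrite Rabs_left by lra.
      assert (snd z * x <= ((/ bb - bb) / 2) * x) by nra.
      nra. }
  set (P := exp (2 * (fst z * dd + snd z * x))) in *.
  set (Q := exp (2 * A * dd)) in *.
  assert (HP0 : 0 < P) by apply exp_pos.
  apply Rle_trans with (Q * (e1 * e2 * e3) * / (4 * (k1 * e1) * (k2 * e2)) * / dd).
  - apply Rmult_le_compat.
    + apply Rmult_le_pos; [lra|]. left; apply Rinv_0_lt_compat; lra.
    + left; apply Rinv_0_lt_compat; lra.
    + apply Rmult_le_compat; [lra| left; apply Rinv_0_lt_compat; lra | lra |].
      apply Rinv_le_contravar; [|apply Rmult_le_compat; [nra|nra|apply Rmult_le_compat_l; lra|lra]].
      apply Rmult_lt_0_compat; [apply Rmult_lt_0_compat; [lra|]|]; apply Rmult_lt_0_compat; lra.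
    + apply Rinv_le_contravar; lra.
  - right. field. repeat split; lra.
Qed.
Lemma integrand_exRInt (z : C) (a c : R) :
  @ex_RInt C_R_CompleteNormedModule (Phi_integrand bb z) a c.
Proof.
  apply ex_RInt_continuous. intros y _. apply Ccont_cont.
  cbv beta zeta delta [Phi_integrand].
  assert (Hw : Ccont (fun x : R => (x, delta_b bb)) y).
  { apply Ccont_pair. apply continuity_pt_id. apply continuity_pt_const. intros u v; reflexivity. }
  assert (HD := denom_pos y). unfold dd in HD. rewrite <- delta_eq in HD.
  assert (Hwp : 0 < Cmod (y, delta_b bb)).
  { rewrite delta_eq. fold dd. generalize (Cmod_pair_snd y dd dd_pos) dd_pos. lra. }
  apply Ccont_div; [apply Ccont_div| exact Hw | apply Cmod_pos_neq0; exact Hwp].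
  - apply Ccont_cexp. apply Ccont_mult; [|exact Hw]. apply Ccont_const.
  - apply Ccont_mult; [apply Ccont_mult|]; [apply Ccont_const| |];
      apply Ccont_csinh; [apply Ccont_mult | apply Ccont_div]; try exact Hw; try apply Ccont_const.
    intros E. injection E. generalize bb_gt1. lra.
  - apply Cmod_pos_neq0. exact HD.
Qed.

Lemma strip_integral_bound (z : C) (A : R) :
  0 <= A -> Rabs (fst z) <= A ->
  (/ bb - bb) / 2 <= snd z <= (/ bb - bb) / 2 + / bb ->
  Cmod (@RInt_gen C_R_CompleteNormedModule (Phi_integrand bb z)
          (Rbar_locally m_infty) (Rbar_locally p_infty))
    <= 2 * (exp (2 * A * dd) / (4 * k1 * k2 * dd)) / kap.
Proof.
  intros HA0 HA Hz. apply improper_bound.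
  - apply kap_pos.
  - generalize (k_pos _ sin1) (k_pos _ sin2) dd_pos (exp_pos (2 * A * dd)). fold k1 k2. intros.
    left. apply Rdiv_lt_0_compat; [lra|]. apply Rmult_lt_0_compat; [apply Rmult_lt_0_compat; [apply Rmult_lt_0_compat; lra|lra]|lra].
  - apply integrand_exRInt.
  - intros x. apply integrand_bound with (A := A); assumption.
Qed.
End Strip.

Open Scope R_scope.

Lemma Nr_ge2 (N : nat) : (2 <= N)%nat -> 2 <= Nr N.
Proof. intros H. unfold Nr. apply le_INR in H. simpl in H. lra. Qed.

Lemma sqrtN_ge (N : nat) : (2 <= N)%nat -> sqrt 2 <= sqrt (Nr N).
Proof. intros H. apply sqrt_le_1_alt. apply Nr_ge2; auto. Qed.

Lemma z_fst (bb : R) (t0 : C) : bb <> 0 ->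
  fst (Ci * RtoC bb * t0 - c_b bb + Ci / RtoC bb)%C = - bb * snd t0.
Proof. intros H. destruct t0. unfold c_b. simpl. field. exact H. Qed.

Lemma z_snd (bb : R) (t0 : C) : bb <> 0 ->
  snd (Ci * RtoC bb * t0 - c_b bb + Ci / RtoC bb)%C = bb * fst t0 - (bb + / bb) / 2 + / bb.
Proof. intros H. destruct t0. unfold c_b. simpl. field. exact H. Qed.

Lemma EN_strip_bound (N : nat) (A : R) : (2 <= N)%nat -> 0 <= A ->
  exists B, forall t0 : C, 0 <= fst t0 <= / Nr N -> Rabs (snd t0) <= A ->
    Cmod (E_N_strip N t0) <= exp B /\ Cmod (/ E_N_strip N t0) <= exp B /\ E_N_strip N t0 <> RtoC 0.
Proof.
  intros HN HA. set (bb := sqrt (Nr N)).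
  assert (Hbb : sqrt 2 <= bb) by (apply sqrtN_ge; auto).
  assert (Hb1 := bb_gt1 bb Hbb).
  assert (Hbsq : bb * bb = Nr N) by (apply sqrt_sqrt; generalize (Nr_ge2 N HN); lra).
  exists (2 * (exp (2 * (bb * A) * dd bb) / (4 * k1 bb * k2 bb * dd bb)) / kap bb).
  intros t0 Ht0 HtA.
  set (z := (Ci * RtoC bb * t0 - c_b bb + Ci / RtoC bb)%C).
  assert (Hb := strip_integral_bound bb Hbb z (bb * A) ltac:(nra)).
  assert (H1 : Rabs (fst z) <= bb * A).
  { unfold z. rewrite z_fst by lra. rewrite Rabs_mult, Rabs_Ropp, Rabs_pos_eq by lra.
    apply Rmult_le_compat_l; lra. }
  assert (H2 : (/ bb - bb) / 2 <= snd z <= (/ bb - bb) / 2 + / bb).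
  { unfold z. rewrite z_snd by lra.
    assert (bb * / Nr N = / bb) by (rewrite <- Hbsq; field; lra).
    assert (0 <= bb * fst t0 <= / bb).
    { split. apply Rmult_le_pos; lra. rewrite <- H. apply Rmult_le_compat_l; lra. }
    split; lra. }
  specialize (Hb H1 H2).
  unfold E_N_strip, Phi_strip. cbv zeta. fold bb. fold z.
  set (I := @RInt_gen C_R_CompleteNormedModule (Phi_integrand bb z) (Rbar_locally m_infty) (Rbar_locally p_infty)) in *.
  assert (HI : Rabs (fst I) <= Cmod I) by (generalize (Rmax_Cmod I); generalize (Rmax_l (Rabs (fst I)) (Rabs (snd I))); lra).
  split; [|split].
  - rewrite Cmod_cexp. apply exp_mono. generalize (Rle_abs (fst I)). lra.
  - rewrite Cmod_inv by apply cexp_neq0. rewrite Cmod_cexp, <- exp_Ropp. apply exp_mono.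
    generalize (Rle_abs (- fst I)). rewrite Rabs_Ropp. lra.
  - apply cexp_neq0.
Qed.

Lemma Cmod_one_minus_lb (w : C) : Rabs (1 - Cmod w) <= Cmod (RtoC 1 - w)%C.
Proof.
  assert (H1 : Cmod (RtoC 1) <= Cmod (RtoC 1 - w)%C + Cmod w).
  { replace (RtoC 1) with (RtoC 1 - w + w)%C at 1 by ring. apply Cmod_triangle. }
  assert (H2 : Cmod w <= Cmod (RtoC 1 - w)%C + Cmod (RtoC 1)).
  { replace w with (- (RtoC 1 - w) + RtoC 1)%C at 1 by ring. eapply Rle_trans; [apply Cmod_triangle|].
    rewrite Cmod_opp. lra. }
  rewrite Cmod_R, Rabs_R1 in *. apply Rabs_le. lra.
Qed.

Lemma Cmod_one_minus_ub (w : C) : Cmod (RtoC 1 - w)%C <= 1 + Cmod w.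
Proof.
  unfold Cminus. eapply Rle_trans; [apply Cmod_triangle|]. rewrite Cmod_opp, Cmod_R, Rabs_R1. lra.
Qed.

Lemma fst_twopii (s : C) : fst (RtoC (2 * PI) * Ci * s)%C = - (2 * PI) * snd s.
Proof. destruct s; simpl; ring. Qed.

Definition lowf (a : R) := 1 - exp (- (2 * PI) * a).
Definition upf (A : R) := 1 + exp ((2 * PI) * A).

Lemma factor_bounds (a A : R) (s : C) : 0 < a -> a <= Rabs (snd s) <= A ->
  lowf a <= Cmod (RtoC 1 - cexp (RtoC (2 * PI) * Ci * s))%C <= upf A.
Proof.
  intros Ha [Hs1 Hs2].
  set (e := Cmod (cexp (RtoC (2 * PI) * Ci * s))).
  assert (He : e = exp (- (2 * PI) * snd s)) by (unfold e; rewrite Cmod_cexp, fst_twopii; reflexivity).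
  assert (HPI := PI_RGT_0).
  split.
  - eapply Rle_trans; [|apply Cmod_one_minus_lb]. fold e. unfold lowf. rewrite He.
    destruct (Rle_dec 0 (snd s)).
    + rewrite Rabs_pos_eq in Hs1 by lra.
      assert (exp (- (2 * PI) * snd s) <= exp (- (2 * PI) * a)) by (apply exp_mono; nra).
      assert (exp (- (2 * PI) * a) < 1) by (rewrite <- exp_0; apply exp_increasing; nra).
      rewrite Rabs_pos_eq by lra. lra.
    + rewrite Rabs_left in Hs1 by lra.
      assert (exp (2 * PI * a) <= exp (- (2 * PI) * snd s)) by (apply exp_mono; nra).
      assert (Hx : exp (2 * PI * a) * exp (- (2 * PI) * a) = 1) by (rewrite <- exp_plus; replace (2 * PI * a + - (2 * PI) * a) with 0 by ring; apply exp_0).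
      assert (1 < exp (2 * PI * a)) by (rewrite <- exp_0; apply exp_increasing; nra).
      assert (0 < exp (- (2 * PI) * a)) by apply exp_pos.
      rewrite Rabs_left1 by lra. nra.
  - eapply Rle_trans; [apply Cmod_one_minus_ub|]. fold e. unfold upf. rewrite He.
    assert (exp (- (2 * PI) * snd s) <= exp (2 * PI * A)); [|lra].
    apply exp_mono. generalize (Rle_abs (- snd s)). rewrite Rabs_Ropp. nra.
Qed.

Lemma cprod_list_bounds (f : nat -> C) (l u : R) (L : list nat) :
  0 < l -> (forall j, l <= Cmod (f j) <= u) ->
  l ^ length L <= Cmod (fold_right Cmult (RtoC 1) (map f L)) <= u ^ length L.
Proof.
  intros Hl Hf. induction L as [|j L IH]; simpl.
  - rewrite Cmod_R, Rabs_R1. lra.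
  - rewrite Cmod_mult. destruct (Hf j). destruct IH.
    assert (0 < l ^ length L) by (apply pow_lt; lra).
    split; apply Rmult_le_compat; lra.
Qed.

Lemma cprod_bounds (f : nat -> C) (l u : R) (n : nat) :
  0 < l -> (forall j, l <= Cmod (f j) <= u) -> l ^ n <= Cmod (cprod f n) <= u ^ n.
Proof.
  intros. unfold cprod. generalize (cprod_list_bounds f l u (seq 0 n) H H0). rewrite length_seq. auto.
Qed.

Lemma Cmod_inv_le (x : C) (m : R) : x <> RtoC 0 -> 0 < m -> m <= Cmod x -> Cmod (/ x)%C <= / m.
Proof. intros. rewrite Cmod_inv by auto. apply Rinv_le_contravar; lra. Qed.

Lemma div_case (S P : C) (eB x y : R) : S <> RtoC 0 -> P <> RtoC 0 ->
  Cmod S <= eB -> Cmod (/ S)%C <= eB -> Cmod P <= x -> Cmod (/ P)%C <= y ->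
  Cmod (S / P)%C <= eB * y /\ Cmod (/ (S / P))%C <= eB * x.
Proof.
  intros HS HP H1 H2 H3 H4. assert (0 <= Cmod S) by apply Cmod_ge_0.
  assert (0 <= Cmod (/ S)%C) by apply Cmod_ge_0. assert (0 <= Cmod P) by apply Cmod_ge_0.
  assert (0 <= Cmod (/ P)%C) by apply Cmod_ge_0.
  split.
  - unfold Cdiv. rewrite Cmod_mult. apply Rmult_le_compat; lra.
  - replace (/ (S / P))%C with (/ S * P)%C by (field; auto). rewrite Cmod_mult.
    apply Rmult_le_compat; lra.
Qed.

Lemma mul_case (S P : C) (eB x y : R) : S <> RtoC 0 -> P <> RtoC 0 ->
  Cmod S <= eB -> Cmod (/ S)%C <= eB -> Cmod P <= x -> Cmod (/ P)%C <= y ->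
  Cmod (S * P)%C <= eB * x /\ Cmod (/ (S * P))%C <= eB * y.
Proof.
  intros HS HP H1 H2 H3 H4. assert (0 <= Cmod S) by apply Cmod_ge_0.
  assert (0 <= Cmod (/ S)%C) by apply Cmod_ge_0. assert (0 <= Cmod P) by apply Cmod_ge_0.
  assert (0 <= Cmod (/ P)%C) by apply Cmod_ge_0.
  split.
  - rewrite Cmod_mult. apply Rmult_le_compat; lra.
  - replace (/ (S * P))%C with (/ S * / P)%C by (field; auto). rewrite Cmod_mult.
    apply Rmult_le_compat; lra.
Qed.

Lemma EN_bound (N : nat) (R0 a A : R) : (2 <= N)%nat -> 0 < a -> a <= A ->
  exists M, forall t : C, Rabs (fst t) <= R0 -> a <= Rabs (snd t) <= A ->
    Cmod (E_N N t) <= M /\ Cmod (/ E_N N t)%C <= M.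
Proof.
  intros HN Ha HaA.
  assert (HA0 : 0 <= A) by lra.
  destruct (EN_strip_bound N A HN HA0) as [B HB].
  assert (HN2 := Nr_ge2 N HN).
  set (l := lowf a). set (u := upf A).
  assert (HPI := PI_RGT_0).
  assert (Hl0 : 0 < l).
  { unfold l, lowf. assert (exp (- (2 * PI) * a) < 1) by (rewrite <- exp_0; apply exp_increasing; nra). lra. }
  assert (Hl1 : l <= 1) by (unfold l, lowf; generalize (exp_pos (- (2 * PI) * a)); lra).
  assert (Hu1 : 1 <= u) by (unfold u, upf; generalize (exp_pos (2 * PI * A)); lra).
  set (li := / l).
  assert (Hli : 1 <= li) by (unfold li; rewrite <- Rinv_1; apply Rinv_le_contravar; lra).
  destruct (nfloor_ex (Rmax 0 (Nr N * R0 + 1)) (Rmax_l _ _)) as [n0 [Hn0 Hn1]].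
  set (K := S n0).
  assert (HK : Nr N * R0 + 1 <= INR K) by (unfold K; rewrite S_INR; generalize (Rmax_r 0 (Nr N * R0 + 1)); lra).
  assert (HuK : 1 <= u ^ K) by (apply pow_R1_Rle; lra).
  assert (HliK : 1 <= li ^ K) by (apply pow_R1_Rle; lra).
  exists (exp B * (u ^ K + li ^ K)).
  intros t HtR HtI.
  assert (HeB := exp_pos B).
  assert (HMB1 : exp B <= exp B * (u ^ K + li ^ K)) by (rewrite <- (Rmult_1_r (exp B)) at 1; apply Rmult_le_compat_l; lra).
  assert (HMBu : exp B * u ^ K <= exp B * (u ^ K + li ^ K)) by (apply Rmult_le_compat_l; lra).
  assert (HMBl : exp B * li ^ K <= exp B * (u ^ K + li ^ K)) by (apply Rmult_le_compat_l; lra).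
  assert (Hfac : forall s : C, snd s = snd t -> l <= Cmod (RtoC 1 - cexp (RtoC (2 * PI) * Ci * s))%C <= u).
  { intros s Hs. apply factor_bounds; auto. rewrite Hs. auto. }
  assert (Hint := base_Int_part (Nr N * Re t)).
  assert (HRe : Re t = fst t) by reflexivity.
  assert (Hst : forall k : Z, IZR k <= Nr N * Re t -> IZR k - Nr N * Re t > -1 ->
    0 <= fst (t - RtoC (IZR k / Nr N))%C <= / Nr N /\ Rabs (snd (t - RtoC (IZR k / Nr N))%C) <= A).
  { intros k Hk1 Hk2. simpl. rewrite HRe in *. split.
    - split.
      + apply Rmult_le_reg_l with (Nr N); [lra|]. field_simplify; lra.
      + apply Rmult_le_reg_l with (Nr N); [lra|]. field_simplify; lra.
    - rewrite Ropp_0, Rplus_0_r. destruct HtI; lra. }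
  assert (HNR : Rabs (Nr N * Re t) <= Nr N * R0).
  { rewrite Rabs_mult, (Rabs_pos_eq (Nr N)) by lra. rewrite HRe. apply Rmult_le_compat_l; lra. }
  assert (Hkb : forall k : Z, IZR k <= Nr N * Re t -> IZR k - Nr N * Re t > -1 -> Rabs (IZR k) <= INR K).
  { intros k Hk1 Hk2. apply Rabs_le. generalize (Rle_abs (Nr N * Re t)) (Rle_abs (- (Nr N * Re t))). rewrite Rabs_Ropp. lra. }
  unfold E_N. cbv zeta.
  destruct Hint as [Hi1 Hi2].
  destruct (HB _ (proj1 (Hst _ Hi1 Hi2)) (proj2 (Hst _ Hi1 Hi2))) as [HS1 [HS2 HS3]].
  generalize (Hkb _ Hi1 Hi2). revert HS1 HS2 HS3.
  destruct (Int_part (Nr N * Re t)) as [|p|p]; intros HS1 HS2 HS3 Hkk.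
  - split; lra.
  - set (S := E_N_strip N _). set (P := cprod _ _).
    assert (HnK : (Pos.to_nat p <= K)%nat).
    { apply INR_le. rewrite INR_IPR. apply Rle_trans with (Rabs (IZR (Z.pos p))); [apply Rle_abs|]. exact Hkk. }
    assert (HP : l ^ Pos.to_nat p <= Cmod P <= u ^ Pos.to_nat p).
    { apply cprod_bounds; auto. intros j. apply Hfac. simpl. ring. }
    assert (HPl : 0 < l ^ Pos.to_nat p) by (apply pow_lt; lra).
    assert (HP0 : P <> RtoC 0) by (apply Cmod_pos_neq0; lra).
    assert (HPu : Cmod P <= u ^ K) by (eapply Rle_trans; [apply HP|]; apply Rle_pow; auto).
    assert (HPi : Cmod (/ P)%C <= li ^ K).
    { eapply Rle_trans; [apply (Cmod_inv_le P (l ^ Pos.to_nat p)); auto; lra|].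
      rewrite <- pow_inv. apply Rle_pow; auto. }
    destruct (div_case S P (exp B) (u ^ K) (li ^ K) HS3 HP0 HS1 HS2 HPu HPi). split; lra.
  - set (S := E_N_strip N _). set (P := cprod _ _).
    assert (HnK : (Pos.to_nat p <= K)%nat).
    { apply INR_le. rewrite INR_IPR. apply Rle_trans with (Rabs (IZR (Z.neg p))); [change (IZR (Z.neg p)) with (- IPR p); rewrite Rabs_Ropp; apply Rle_abs|]. exact Hkk. }
    assert (HP : l ^ Pos.to_nat p <= Cmod P <= u ^ Pos.to_nat p).
    { apply cprod_bounds; auto. intros j. apply Hfac. simpl. ring. }
    assert (HPl : 0 < l ^ Pos.to_nat p) by (apply pow_lt; lra).
    assert (HP0 : P <> RtoC 0) by (apply Cmod_pos_neq0; lra).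
    assert (HPu : Cmod P <= u ^ K) by (eapply Rle_trans; [apply HP|]; apply Rle_pow; auto).
    assert (HPi : Cmod (/ P)%C <= li ^ K).
    { eapply Rle_trans; [apply (Cmod_inv_le P (l ^ Pos.to_nat p)); auto; lra|].
      rewrite <- pow_inv. apply Rle_pow; auto. }
    destruct (mul_case S P (exp B) (u ^ K) (li ^ K) HS3 HP0 HS1 HS2 HPu HPi). split; lra.
Qed.

Open Scope R_scope.

Lemma Cmod_Cinv_all (w : C) : Cmod (/ w)%C = / Cmod w.
Proof.
  destruct (Ceq_dec w (RtoC 0)) as [E|E].
  - subst. rewrite Cmod_0. rewrite Rinv_0.
    replace (/ RtoC 0)%C with (RtoC 0). apply Cmod_0.
    unfold Cinv. simpl. apply injective_projections; simpl; unfold Rdiv; ring.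
  - apply Cmod_inv; auto.
Qed.

Section LBsec.
Variable n : nat.
Variable p : nat -> C.

Definition near (d : R) (x : nat -> C) := forall i, (i < n)%nat -> Cmod (x i - p i) < d.

Definition Cont (g : (nat -> C) -> C) :=
  forall eps, 0 < eps -> exists d, 0 < d /\ forall x, near d x -> Cmod (g x - g p) < eps.

Lemma near_mono d1 d2 x : d1 <= d2 -> near d1 x -> near d2 x.
Proof. intros H N i Hi. specialize (N i Hi). lra. Qed.

Lemma LB_mult f g : no_pole_at n f p -> no_pole_at n g p -> no_pole_at n (fun x => f x * g x)%C p.
Proof.
  intros [d1 [Hd1 [M1 H1]]] [d2 [Hd2 [M2 H2]]].
  exists (Rmin d1 d2). split; [apply Rmin_glb_lt; auto|]. exists (M1 * M2).
  intros x Hx. rewrite Cmod_mult. apply Rmult_le_compat; try apply Cmod_ge_0.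
  - apply H1. intros i Hi. specialize (Hx i Hi). generalize (Rmin_l d1 d2). lra.
  - apply H2. intros i Hi. specialize (Hx i Hi). generalize (Rmin_r d1 d2). lra.
Qed.

Lemma LB_const c : no_pole_at n (fun _ => c) p.
Proof. exists 1. split; [lra|]. exists (Cmod c). intros; lra. Qed.

Lemma LB_inv_mult f g : no_pole_at n (fun x => / f x)%C p -> no_pole_at n (fun x => / g x)%C p ->
  no_pole_at n (fun x => / (f x * g x))%C p.
Proof.
  intros H1 H2. destruct (LB_mult _ _ H1 H2) as [d [Hd [M HM]]]. exists d. split; auto. exists M.
  intros x Hx. specialize (HM x Hx). rewrite Cmod_mult, !Cmod_Cinv_all in HM.
  rewrite Cmod_Cinv_all, Cmod_mult, Rinv_mult. exact HM.
Qed.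

Lemma LB_div f g : no_pole_at n f p -> no_pole_at n (fun x => / g x)%C p ->
  no_pole_at n (fun x => f x / g x)%C p.
Proof. intros. unfold Cdiv. apply LB_mult; auto. Qed.

Lemma Cont_const c : Cont (fun _ => c).
Proof. intros e He. exists 1. split; [lra|]. intros. replace (c - c)%C with (RtoC 0) by ring. rewrite Cmod_0. lra. Qed.

Lemma Cont_coord i : (i < n)%nat -> Cont (fun x => x i).
Proof. intros Hi e He. exists e. split; [exact He|]. intros x Hx. apply Hx; auto. Qed.

Lemma Cont_plus f g : Cont f -> Cont g -> Cont (fun x => f x + g x)%C.
Proof.
  intros Hf Hg e He. destruct (Hf (e/2) ltac:(lra)) as [d1 [Hd1 H1]].
  destruct (Hg (e/2) ltac:(lra)) as [d2 [Hd2 H2]].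
  exists (Rmin d1 d2). split; [apply Rmin_glb_lt; auto|]. intros x Hx.
  replace (f x + g x - (f p + g p))%C with ((f x - f p) + (g x - g p))%C by ring.
  eapply Rle_lt_trans; [apply Cmod_triangle|].
  assert (Cmod (f x - f p) < e / 2) by (apply H1; eapply near_mono; [apply Rmin_l|exact Hx]).
  assert (Cmod (g x - g p) < e / 2) by (apply H2; eapply near_mono; [apply Rmin_r|exact Hx]).
  lra.
Qed.

Lemma Cont_opp f : Cont f -> Cont (fun x => - f x)%C.
Proof.
  intros Hf e He. destruct (Hf e He) as [d [Hd H]]. exists d. split; auto. intros x Hx.
  replace (- f x - - f p)%C with (- (f x - f p))%C by ring. rewrite Cmod_opp. auto.
Qed.

Lemma Cont_minus f g : Cont f -> Cont g -> Cont (fun x => f x - g x)%C.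
Proof. intros. unfold Cminus. apply Cont_plus; [|apply Cont_opp]; auto. Qed.

Lemma LB_cexp h : Cont h -> no_pole_at n (fun x => cexp (h x)) p.
Proof.
  intros Hh. destruct (Hh 1 ltac:(lra)) as [d [Hd H]]. exists d. split; auto.
  exists (exp (fst (h p) + 1)). intros x Hx. rewrite Cmod_cexp. apply exp_mono.
  specialize (H x Hx). generalize (Rmax_Cmod (h x - h p)%C). intros HM.
  generalize (Rmax_l (Rabs (fst (h x - h p)%C)) (Rabs (snd (h x - h p)%C))). intros.
  generalize (Rle_abs (fst (h x - h p)%C)). intros.
  assert (E : fst (h x - h p)%C = fst (h x) - fst (h p)) by (simpl; ring).
  rewrite E in *. lra.
Qed.

Lemma LB_EN (N : nat) g : (2 <= N)%nat -> Cont g -> snd (g p) <> 0 ->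
  no_pole_at n (fun x => E_N N (g x)) p /\ no_pole_at n (fun x => / E_N N (g x))%C p.
Proof.
  intros HN Hg Hs.
  set (a := Rabs (snd (g p)) / 2).
  assert (Ha : 0 < a) by (unfold a; generalize (Rabs_pos_lt _ Hs); lra).
  destruct (EN_bound N (Rabs (fst (g p)) + 1) a (Rabs (snd (g p)) + 1) HN Ha ltac:(unfold a; generalize (Rabs_pos (snd (g p))); lra)) as [M HM].
  destruct (Hg (Rmin 1 a) ltac:(apply Rmin_glb_lt; lra)) as [d [Hd H]].
  assert (Hx : forall x, near d x -> Rabs (fst (g x)) <= Rabs (fst (g p)) + 1 /\
     a <= Rabs (snd (g x)) <= Rabs (snd (g p)) + 1).
  { intros x Hx. specialize (H x Hx).
    generalize (Rmax_Cmod (g x - g p)%C). intros HM'.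
    generalize (Rmax_l (Rabs (fst (g x - g p)%C)) (Rabs (snd (g x - g p)%C))).
    generalize (Rmax_r (Rabs (fst (g x - g p)%C)) (Rabs (snd (g x - g p)%C))).
    generalize (Rmin_l 1 a) (Rmin_r 1 a). intros.
    assert (E1 : fst (g x - g p)%C = fst (g x) - fst (g p)) by (simpl; ring).
    assert (E2 : snd (g x - g p)%C = snd (g x) - snd (g p)) by (simpl; ring).
    rewrite E1, E2 in *.
    assert (Rabs (fst (g x) - fst (g p)) < 1) by lra.
    assert (Rabs (snd (g x) - snd (g p)) < a) by lra.
    assert (Hf := Rabs_triang_inv (fst (g x)) (fst (g p))).
    assert (Hf2 := Rabs_triang_inv (fst (g p)) (fst (g x))).
    assert (Hs1 := Rabs_triang_inv (snd (g x)) (snd (g p))).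
    assert (Hs2 := Rabs_triang_inv (snd (g p)) (snd (g x))).
    rewrite Rabs_minus_sym in Hf2, Hs2. unfold a in *. lra. }
  split; exists d; split; auto; exists M; intros x Hxn; destruct (Hx x Hxn);
    destruct (HM (g x)); auto.
Qed.
End LBsec.

Open Scope R_scope.

Lemma Cont_scal n p c g : Cont n p g -> Cont n p (fun x => c * g x)%C.
Proof.
  intros Hg e He. assert (Hc := Cmod_ge_0 c).
  destruct (Hg (e / (Cmod c + 1))) as [d [Hd H]].
  { apply Rdiv_lt_0_compat; lra. }
  exists d. split; auto. intros x Hx.
  replace (c * g x - c * g p)%C with (c * (g x - g p))%C by ring. rewrite Cmod_mult.
  specialize (H x Hx). assert (Hg0 := Cmod_ge_0 (g x - g p)%C).
  apply Rle_lt_trans with ((Cmod c + 1) * Cmod (g x - g p)%C); [nra|].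
  apply Rmult_lt_reg_r with (/ (Cmod c + 1)); [apply Rinv_0_lt_compat; lra|].
  replace ((Cmod c + 1) * Cmod (g x - g p)%C * / (Cmod c + 1)) with (Cmod (g x - g p)%C) by (field; lra).
  replace (e * / (Cmod c + 1)) with (e / (Cmod c + 1)) by reflexivity. exact H.
Qed.

Lemma LB_ext n p f g : (forall x, f x = g x) -> no_pole_at n g p -> no_pole_at n f p.
Proof. intros E [d [Hd [M H]]]. exists d. split; auto. exists M. intros x Hx. rewrite E. auto. Qed.

Lemma LB_fold {A : Type} n p (F : A -> (nat -> C) -> C) (l : list A) :
  (forall a, In a l -> no_pole_at n (F a) p) ->
  no_pole_at n (fun x => fold_right Cmult (RtoC 1) (map (fun a => F a x) l)) p.
Proof.
  induction l as [|a l IH]; intros H; simpl.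
  - apply LB_const.
  - apply LB_mult; [apply H; left; auto | apply IH; intros; apply H; right; auto].
Qed.

Lemma snd_Cplus (a b : C) : snd (a + b)%C = snd a + snd b.
Proof. reflexivity. Qed.
Lemma snd_Cminus (a b : C) : snd (a - b)%C = snd a - snd b.
Proof. destruct a, b; simpl; ring. Qed.
Lemma snd_RtoC (r : R) : snd (RtoC r) = 0.
Proof. reflexivity. Qed.
Lemma snd_divR (a : C) (r : R) : r <> 0 -> snd (a / RtoC r)%C = snd a / r.
Proof. intros H. destruct a; simpl. field. exact H. Qed.

Lemma Cmod_epow_ratio (e : bool) (X Y : C) (u v : R) :
  Cmod X = exp u -> Cmod Y = exp v -> u = v -> Cmod (epow e (X / Y))%C = 1.
Proof.
  intros HX HY E. assert (H : Cmod (X / Y)%C = 1).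
  { unfold Cdiv. rewrite Cmod_mult, Cmod_Cinv_all, HX, HY, E. field. apply Rgt_not_eq, exp_pos. }
  destruct e; simpl; [exact H|]. rewrite Cmod_Cinv_all, H. apply Rinv_1.
Qed.

Lemma Cmod_meridian (mu : C) : Cmod (meridian mu) = exp (- (2 * PI) * snd mu).
Proof. unfold meridian, twopii. rewrite Cmod_cexp. destruct mu; simpl; f_equal; ring. Qed.

Lemma cexp_0 : cexp (RtoC 0) = RtoC 1.
Proof. rewrite cexp_eq. simpl. rewrite exp_0, cos_0, sin_0. apply injective_projections; simpl; ring. Qed.

Section Main.
Variables (N : nat) (mu : C) (D : diagram) (b beta : nat -> C) (t : nat -> R).
Hypothesis HN : (2 <= N)%nat.
Hypothesis Hbeta : forall i, (i < nE D)%nat -> cexp (twopii * beta i) = b i.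

Definition okseg (s : seg) := forall i, s = Defs.Int i -> (i < nE D)%nat.
Definition pp : nat -> C := fun i => RtoC (t i).
Definition tx (x : nat -> C) : nat -> C := fun i => Cplus (Cdiv (beta i) (RtoC (INR N))) (x i).
Definition Imb (s : seg) : R := match s with Defs.Int i => snd (beta i) | _ => 0 end.

Lemma NrN_pos : 0 < Nr N.
Proof. generalize (Nr_ge2 N HN). lra. Qed.

Lemma Cont_init s : okseg s -> Cont (nE D) pp (fun x => init_val D (tx x) s).
Proof.
  intros H. destruct s; simpl; try apply Cont_const.
  unfold tx. apply Cont_plus; [apply Cont_const | apply Cont_coord, H; reflexivity].
Qed.

Lemma Cont_final s : okseg s -> Cont (nE D) pp (fun x => final_val N D (tx x) s).
Proof. intros H. unfold final_val. apply Cont_plus; [apply Cont_init; auto | apply Cont_const]. Qed.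

Lemma snd_init s : snd (init_val D (tx pp) s) = Imb s / Nr N.
Proof.
  destruct s; simpl; try (unfold Rdiv; ring).
  unfold Nr. generalize NrN_pos. unfold Nr. intros. field. lra.
Qed.

Lemma snd_final s : snd (final_val N D (tx pp) s) = Imb s / Nr N.
Proof. unfold final_val. rewrite snd_Cplus, snd_init, snd_RtoC. ring. Qed.

Lemma Cmod_bval s : okseg s -> Cmod (bval b s) = exp (- (2 * PI) * Imb s).
Proof.
  intros H. destruct s; simpl.
  1,2: rewrite Cmod_R, Rabs_R1, Rmult_0_r, exp_0; reflexivity.
  rewrite <- Hbeta by (apply H; reflexivity). unfold twopii. rewrite Cmod_cexp.
  destruct (beta i); simpl; f_equal; ring.
Qed.

Lemma Cmod_bval_m (s : seg) : okseg s ->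
  Cmod (meridian mu * bval b s)%C = exp (- (2 * PI) * snd mu + - (2 * PI) * Imb s).
Proof. intros H. rewrite Cmod_mult, Cmod_meridian, Cmod_bval by auto. rewrite exp_plus. reflexivity. Qed.

Lemma zN_ne c : okseg (s1 c) -> okseg (s2' c) -> Cmod (zN mu b c) <> 1 -> Imb (s2' c) - Imb (s1 c) <> 0.
Proof.
  intros H1 H2 Hz E. apply Hz. unfold zN.
  apply Cmod_epow_ratio with (- (2 * PI) * Imb (s2' c)) (- (2 * PI) * Imb (s1 c));
    [apply Cmod_bval; auto | apply Cmod_bval; auto | nra].
Qed.

Lemma zS_ne c : okseg (s2 c) -> okseg (s1' c) -> Cmod (zS mu b c) <> 1 -> Imb (s2 c) - Imb (s1' c) <> 0.
Proof.
  intros H1 H2 Hz E. apply Hz. unfold zS.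
  apply Cmod_epow_ratio with (- (2 * PI) * Imb (s2 c)) (- (2 * PI) * Imb (s1' c));
    [apply Cmod_bval; auto | apply Cmod_bval; auto | nra].
Qed.

Lemma zW_ne c : okseg (s1 c) -> okseg (s2 c) -> Cmod (zW mu b c) <> 1 ->
  Imb (s2 c) - Imb (s1 c) - snd mu <> 0.
Proof.
  intros H1 H2 Hz E. apply Hz. unfold zW.
  apply Cmod_epow_ratio with (- (2 * PI) * Imb (s2 c)) (- (2 * PI) * snd mu + - (2 * PI) * Imb (s1 c));
    [apply Cmod_bval; auto | apply Cmod_bval_m; auto | nra].
Qed.

Lemma zE_ne c : okseg (s1' c) -> okseg (s2' c) -> Cmod (zE mu b c) <> 1 ->
  snd mu + Imb (s2' c) - Imb (s1' c) <> 0.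
Proof.
  intros H1 H2 Hz E. apply Hz. unfold zE.
  apply Cmod_epow_ratio with (- (2 * PI) * snd mu + - (2 * PI) * Imb (s2' c)) (- (2 * PI) * Imb (s1' c));
    [apply Cmod_bval_m; auto | apply Cmod_bval; auto | nra].
Qed.

Lemma LB_EN1 g : Cont (nE D) pp g -> snd (g pp) <> 0 -> no_pole_at (nE D) (fun x => E_N N (g x)) pp.
Proof. intros. apply (LB_EN (nE D) pp N g HN); auto. Qed.
Lemma LB_EN2 g : Cont (nE D) pp g -> snd (g pp) <> 0 -> no_pole_at (nE D) (fun x => / E_N N (g x))%C pp.
Proof. intros. apply (LB_EN (nE D) pp N g HN); auto. Qed.

Ltac cont := repeat first [ apply Cont_init; assumption | apply Cont_final; assumption
  | apply Cont_const | apply Cont_plus | apply Cont_minus | apply Cont_opp | apply Cont_scal ].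

Ltac sndne Hne := cbv beta;
  repeat first [rewrite snd_Cminus | rewrite snd_Cplus];
  rewrite ?snd_init, ?snd_final, ?snd_divR, ?snd_RtoC by (generalize NrN_pos; lra);
  let E := fresh "E" in intro E; apply Hne; assert (HNp := NrN_pos);
  apply (Rmult_eq_reg_r (/ Nr N)); [ unfold Rdiv in E; rewrite Rmult_0_l; nra | apply Rinv_neq_0_compat; lra ].

Lemma LB_crossing c : okseg (s1 c) -> okseg (s2 c) -> okseg (s1' c) -> okseg (s2' c) ->
  Cmod (zN mu b c) <> 1 -> Cmod (zS mu b c) <> 1 -> Cmod (zW mu b c) <> 1 -> Cmod (zE mu b c) <> 1 ->
  no_pole_at (nE D) (fun x => crossing_weight N mu D (tx x) c) pp.
Proof.
  intros H1 H2 H1' H2' HzN HzS HzW HzE.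
  assert (NN := zN_ne c H1 H2' HzN). assert (NS := zS_ne c H2 H1' HzS).
  assert (NW := zW_ne c H1 H2 HzW). assert (NE := zE_ne c H1' H2' HzE).
  destruct (Defs.positive c) eqn:Hp.
  - apply LB_ext with (fun x => Lambda_plus N mu (final_val N D (tx x) (s1 c)) (final_val N D (tx x) (s2 c))
       (init_val D (tx x) (s1' c)) (init_val D (tx x) (s2' c))).
    { intros x. unfold crossing_weight. rewrite Hp. reflexivity. }
    unfold Lambda_plus. cbv zeta.
    apply LB_mult; [apply LB_div; [apply LB_mult | apply LB_inv_mult] | apply LB_cexp].
    + apply LB_EN1; [cont | sndne NN].
    + apply LB_EN1; [cont | sndne NS].
    + apply LB_EN2; [cont | sndne NW].
    + apply LB_EN2; [cont | sndne NE].
    + cont.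
  - apply LB_ext with (fun x => Lambda_minus N mu (final_val N D (tx x) (s1 c)) (final_val N D (tx x) (s2 c))
       (init_val D (tx x) (s1' c)) (init_val D (tx x) (s2' c))).
    { intros x. unfold crossing_weight. rewrite Hp. reflexivity. }
    unfold Lambda_minus. cbv zeta.
    apply LB_mult; [apply LB_div; [apply LB_mult | apply LB_inv_mult] | apply LB_cexp].
    + apply LB_EN1; [cont | sndne NW].
    + apply LB_EN1; [cont | sndne NE].
    + apply LB_EN2; [cont | sndne NN].
    + apply LB_EN2; [cont | sndne NS].
    + cont.
Qed.
End Main.

Close Scope R_scope.

Lemma seg_ok (D : diagram) (c : crossing) : wf_diagram D -> In c (crossings D) ->
  okseg D (s1 c) /\ okseg D (s2 c) /\ okseg D (s1' c) /\ okseg D (s2' c).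
Proof.
  intros [_ [H2 _]] Hc.
  assert (Hin : forall s, In s (incoming D) -> okseg D s).
  { intros s Hs i E. destruct (Nat.lt_ge_cases i (nE D)) as [L|L]; auto.
    exfalso. apply (proj1 (H2 i L)). rewrite <- E. exact Hs. }
  assert (Hout : forall s, In s (outgoing D) -> okseg D s).
  { intros s Hs i E. destruct (Nat.lt_ge_cases i (nE D)) as [L|L]; auto.
    exfalso. apply (proj2 (H2 i L)). rewrite <- E. exact Hs. }
  repeat split; [apply Hin | apply Hin | apply Hout | apply Hout];
    unfold incoming, outgoing; apply in_flat_map; exists c; split; simpl; auto.
Qed.

Theorem mainTheorem3 (N : nat) (mu : C) (D : diagram) (b beta : nat -> C) :
  (2 <= N)%nat ->
  wf_diagram D ->
  segment_equations D mu b ->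
  (forall i, (i < nE D)%nat -> b i <> RtoC 0) ->
  (forall c z, In c (crossings D) -> In z (shapes mu b c) ->
     Cmod z <> 1%R /\ z <> RtoC 0) ->
  (forall i, (i < nE D)%nat -> cexp (twopii * beta i) = b i) ->
  forall t : nat -> R,
    no_pole_at (nE D)
      (fun x : nat -> C => W N mu D (fun i => Cplus (Cdiv (beta i) (RtoC (INR N))) (x i)))
      (fun i => RtoC (t i)).
Proof.
  intros HN Hwf _ _ Hsh Hbeta t.
  change (fun i => RtoC (t i)) with (pp t).
  apply (LB_ext _ _ _ (fun x => fold_right Cmult (RtoC 1)
     (map (fun c => crossing_weight N mu D (tx N beta x) c) (crossings D)))).
  { intros x. reflexivity. }
  apply (LB_fold _ _ (fun c x => crossing_weight N mu D (tx N beta x) c)).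
  intros c Hc. destruct (seg_ok D c Hwf Hc) as [H1 [H2 [H3 H4]]].
  apply (LB_crossing N mu D b beta t HN Hbeta); auto;
    (apply (Hsh c); [exact Hc | simpl; tauto]).
Qed.
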